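(* Assume the standing setting below. Let $I$ be a set independent in both $M$ and $N$ which is dually safe, let $W:=W(M/I,N/I)$ and let $B\in B(M/I,N/I,W)$. Then $I\cup B$ is a nice feasible set which is dually safe.
   Context: Standing setting: $E$ is countable, $M$ is a finitary matroid on $E$ (all circuits finite), $N$ is a matroid on $E$ that is a direct sum of a finitary and a cofinitary matroid (cofinitary = dual is finitary). $E_0$ is the union of the finitary components of $N$ (components = connected components of the circuit hypergraph) and $E_1:=E\setminus E_0$; for $F\subseteq E$, $F^j:=F\cap E_j$. $\mathring{\mathsf{span}}_M(F):=\mathsf{span}_M(F)\setminus F$. $F$ is dually safe if $F^1\subseteq\mathsf{span}_{N^*}(\mathring{\mathsf{span}}_M(F))$. Matroids are possibly infinite; $M/X:=(M^*\upharpoonright(E\setminus X))^*$, $M.X:=M/(E\setminus X)$; $r(K)=0$ means $\varnothing$ is a base of $K$. $W$ is an $(M,N)$-wave if $M\upharpoonright W$ has a base independent in $N.W$; the union of all waves is a wave, $W(M,N)$. $B(M,N,X)$ is the set of common bases of $M\upharpoonright X$ and $N.X$. $\mathsf{cond}(M,N)$: for every wave $W$, $N.W$ has an $M$-independent base; $\mathsf{cond}^+(M,N)$: $W(M,N)$ consists of $M$-loops and $r(N.W(M,N))=0$. A set $I$ independent in $M$ and $N$ is feasible if $\mathsf{cond}(M/I,N/I)$, nice feasible if moreover $\mathsf{cond}^+(M/I,N/I)$. *)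

(* Defs.v *)
From Stdlib Require Import List Relations.

Set Implicit Arguments.

Section Sets.
Variable E : Type.
Definition subset (A B : E -> Prop) := forall x, A x -> B x.
Definition setU (A B : E -> Prop) : E -> Prop := fun x => A x \/ B x.
Definition setI (A B : E -> Prop) : E -> Prop := fun x => A x /\ B x.
Definition setC (A : E -> Prop) : E -> Prop := fun x => ~ A x.
Definition setD (A B : E -> Prop) : E -> Prop := fun x => A x /\ ~ B x.
Definition set0 : E -> Prop := fun _ => False.
Definition setT : E -> Prop := fun _ => True.
Definition set1 (a : E) : E -> Prop := fun x => x = a.
Definition finite_set (A : E -> Prop) := exists l : list E, forall x, A x -> In x l.
Definition countable_type := exists f : E -> nat, forall x y, f x = f y -> x = y.
End Sets.

(* A matroid is given by its ground set and its independence predicate;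
   the matroid axioms are imposed separately by [is_matroid]. *)
Record matroid (E : Type) := Matroid {
  ground : E -> Prop;
  indep : (E -> Prop) -> Prop
}.

Section Matroids.
Variable E : Type.
Implicit Types (M N : matroid E) (X I J B C F W : E -> Prop).

Definition base M B :=
  indep M B /\ forall J, indep M J -> subset B J -> subset J B.

Definition is_matroid M :=
  (forall I, indep M I -> subset I (ground M)) /\
  indep M (@set0 E) /\
  (forall I J, indep M I -> subset J I -> indep M J) /\
  (forall I B, indep M I -> ~ base M I -> base M B ->
     exists x, B x /\ ~ I x /\ indep M (setU I (set1 x))) /\
  (forall I X, indep M I -> subset I X -> subset X (ground M) ->
     exists J, indep M J /\ subset I J /\ subset J X /\
       forall J', indep M J' -> subset J J' -> subset J' X -> subset J' J).

Definition dual M : matroid E :=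
  Matroid (ground M)
    (fun I => subset I (ground M) /\ exists B, base M B /\ forall x, I x -> ~ B x).

Definition restr M X : matroid E :=
  Matroid (setI (ground M) X) (fun I => indep M I /\ subset I X).

Definition contr M X : matroid E := dual (restr (dual M) (setC X)).

Definition contr_to M X : matroid E := contr M (setC X).

Definition circuit M C :=
  subset C (ground M) /\ ~ indep M C /\
  forall D, subset D C -> ~ subset C D -> indep M D.

Definition loop M (x : E) := ground M x /\ ~ indep M (set1 x).

Definition span M X : E -> Prop := fun x =>
  ground M x /\
  (X x \/ exists C, circuit M C /\ C x /\ forall y, C y -> y <> x -> X y).

Definition spano M F : E -> Prop := setD (span M F) F.

Definition finitary M := forall C, circuit M C -> finite_set C.
Definition cofinitary M := finitary (dual M).

(* N is the direct sum of a finitary and a cofinitary matroid *)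
Definition fin_cofin_sum N :=
  exists P : E -> Prop,
    (forall I, indep N I <->
       (subset I (ground N) /\ indep N (setI I P) /\ indep N (setI I (setC P)))) /\
    finitary (restr N P) /\ cofinitary (restr N (setC P)).

Definition conn N : relation E :=
  clos_refl_trans E (fun a b => exists C, circuit N C /\ C a /\ C b).
Definition component_of N (y : E) : E -> Prop := fun z => conn N y z.

Definition E0 N : E -> Prop := fun x =>
  exists y, component_of N y x /\ finitary (restr N (component_of N y)).
Definition E1 N : E -> Prop := setC (E0 N).

Definition dually_safe M N F :=
  forall x, F x -> E1 N x -> span (dual N) (spano M F) x.

Definition wave M N W :=
  subset W (ground M) /\
  exists B, base (restr M W) B /\ indep (contr_to N W) B.

(* W(M,N): the union of all waves *)
Definition Wmax M N : E -> Prop := fun x => exists W, wave M N W /\ W x.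

(* B(M,N,X): common bases of M|X and N.X *)
Definition Bset M N X B := base (restr M X) B /\ base (contr_to N X) B.

Definition cond M N :=
  forall W, wave M N W -> exists B, base (contr_to N W) B /\ indep M B.

(* r(K) = 0 means the empty set is a base of K *)
Definition cond_plus M N :=
  (forall x, Wmax M N x -> loop M x) /\
  base (contr_to N (Wmax M N)) (@set0 E).

Definition feasible M N I :=
  indep M I /\ indep N I /\ cond (contr M I) (contr N I).

Definition nice_feasible M N I :=
  feasible M N I /\ cond_plus (contr M I) (contr N I).

End Matroids.

(* Main.v *)
Require Import Defs.
From Stdlib Require Import Classical.

Definition remx {E} (A : E -> Prop) (x : E) : E -> Prop := fun z => A z /\ z <> x.
Definition disj {E} (A B : E -> Prop) := forall x, A x -> ~ B x.
Definition maxin {E} (M : matroid E) (Z J : E -> Prop) :=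
  indep M J /\ subset J Z /\
  forall J', indep M J' -> subset J J' -> subset J' Z -> subset J' J.

Ltac sunf := unfold subset, setU, setI, setC, setD, set1, set0, setT, remx, disj in *.

Lemma indep_sub {E} {M : matroid E} (hM : is_matroid M) A C :
  indep M A -> subset C A -> indep M C.
Proof. destruct hM as (_&_&h&_). eauto. Qed.

Lemma indep_ground {E} {M : matroid E} (hM : is_matroid M) A :
  indep M A -> subset A (ground M).
Proof. destruct hM as (h&_). eauto. Qed.

Lemma indep_empty {E} {M : matroid E} (hM : is_matroid M) : indep M (@set0 E).
Proof. destruct hM as (_&h&_). exact h. Qed.

Lemma ext_maxin {E} {M : matroid E} (hM : is_matroid M) I0 Z :
  indep M I0 -> subset I0 Z -> exists J, maxin M Z J /\ subset I0 J.
Proof.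
  intros hI hs. pose proof hM as (h1&_&_&_&hIM).
  destruct (hIM I0 (fun x => Z x /\ ground M x)) as (J&hJ&h0&hJX&hmax); auto.
  - intros x hx. split; auto. eapply h1; eauto.
  - intros x [_ hx]; auto.
  - exists J. split; auto. split; auto. split.
    + intros x hx; apply hJX; auto.
    + intros J' h' h'' h'''. apply hmax; auto. intros x hx; split; auto. eapply h1; eauto.
Qed.

Lemma exists_maxin {E} {M : matroid E} (hM : is_matroid M) Z : exists J, maxin M Z J.
Proof.
  destruct (ext_maxin hM (@set0 E) Z (indep_empty hM)) as (J&hJ&_). intros x [].
  eauto.
Qed.

Lemma maxin_base {E} {M : matroid E} (hM : is_matroid M) B :
  maxin M (ground M) B -> base M B.
Proof.
  intros (h1&h2&h3). split; auto. intros J hJ hs. apply h3; auto. eapply indep_ground; eauto.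
Qed.

Lemma base_exists {E} {M : matroid E} (hM : is_matroid M) : exists B, base M B.
Proof. destruct (exists_maxin hM (ground M)) as (B&hB). exists B. apply maxin_base; auto. Qed.

Lemma base_indep {E} {M : matroid E} {B} : base M B -> indep M B.
Proof. intros [h _]; auto. Qed.

Lemma base_of_noext {E} {M : matroid E} (hM : is_matroid M) J :
  indep M J -> (forall z, indep M (setU J (set1 z)) -> J z) -> base M J.
Proof.
  intros hJ hn. apply NNPP. intros hb.
  destruct (base_exists hM) as (B0&hB0).
  pose proof hM as (_&_&_&hI3&_).
  destruct (hI3 J B0 hJ hb hB0) as (x&_&hx&hi). apply hx. auto.
Qed.

Lemma base_ext {E} {M : matroid E} (hM : is_matroid M) A A' :
  base M A -> subset A A' -> subset A' A -> base M A'.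
Proof.
  intros [hA hm] h1 h2. split.
  - eapply indep_sub; eauto.
  - intros J hJ hs. intros x hx. apply h1. apply (hm J hJ); auto.
    intros y hy; apply hs; apply h1; auto.
Qed.

Lemma exch_base {E} {M : matroid E} (hM : is_matroid M) B1 x c :
  base M B1 -> B1 x -> ~ B1 c -> indep M (setU (remx B1 x) (set1 c)) ->
  base M (setU (remx B1 x) (set1 c)).
Proof.
  intros hB hx hc hi. apply NNPP; intro hnb.
  pose proof hM as (_&_&_&hI3&_).
  destruct (hI3 _ B1 hi hnb hB) as (z&hz&hnz&hiz).
  assert (z = x).
  { apply NNPP; intro hne. apply hnz. left. split; auto. }
  subst z. apply hc. destruct hB as [_ hm].
  apply (hm (setU B1 (set1 c))).
  - eapply indep_sub; eauto. sunf. intros y [hy|hy]; [|left; right; auto].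
    destruct (classic (y = x)); [right; auto| left; left; auto].
  - sunf; auto.
  - sunf; auto.
Qed.

Lemma P1 {E} {M : matroid E} (hM : is_matroid M) B Z :
  base M B -> maxin M Z (setI B Z) ->
  base (restr (dual M) (setC Z)) (fun x => ground M x /\ ~ Z x /\ ~ B x).
Proof.
  intros hB hBZ. split.
  - simpl. split; [split|].
    + intros x (h&_); auto.
    + exists B. split; auto. intros x (_&_&h); auto.
    + intros x (_&h&_); auto.
  - simpl. intros J' ((hJG&B'&hB'&hd)&hJZ) hS x hx.
    split; [auto|split; [apply hJZ; auto|]]. intro hBx.
    pose proof hM as (_&_&_&hI3&_).
    assert (hnb : ~ base M (remx B x)).
    { intros [_ hm]. assert (h := hm B (base_indep hB)). 
      assert (hh : subset (remx B x) B) by (sunf; tauto).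
      specialize (h hh x hBx). sunf. tauto. }
    assert (hi : indep M (remx B x)).
    { apply (indep_sub hM B); [apply base_indep; exact hB | sunf; tauto]. }
    destruct (hI3 _ B' hi hnb hB') as (y&hy&hny&hiy).
    assert (hyx : y <> x). { intro; subst. apply (hd x hx hy). }
    assert (hBy : ~ B y). { intro. apply hny. sunf. auto. }
    assert (hZy : Z y).
    { apply NNPP; intro hZ. apply (hd y); auto. apply hS. split; [|auto].
      eapply (indep_ground hM B'); [apply base_indep; exact hB'|auto]. }
    destruct hBZ as (_&_&hm).
    assert (h := hm (setU (setI B Z) (set1 y))).
    assert (hzx : ~ Z x) by (apply hJZ; auto).
    refine (hBy (proj1 (h _ _ _ y _))).
    + eapply indep_sub; eauto. sunf. intros z [[h1 h2]|h1]; [left; split; auto|right; auto].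
      intro; subst; auto.
    + sunf; auto.
    + sunf. intros z [[h1 h2]|h1]; subst; auto.
    + sunf; auto.
Qed.

Lemma base_of_maxin_sup {E} {M : matroid E} (hM : is_matroid M) X J B0 :
  maxin M X J -> base M B0 -> subset B0 X -> base M J.
Proof.
  intros (hJ&hJX&hm) hB0 hs. apply NNPP; intro hb.
  pose proof hM as (_&_&_&hI3&_).
  destruct (hI3 J B0 hJ hb hB0) as (z&hz&hnz&hi).
  apply hnz. apply (hm _ hi); sunf; auto. intros y [h|h]; subst; auto.
Qed.

Lemma P2 {E} {M : matroid E} (hM : is_matroid M) S Z :
  base (restr (dual M) (setC Z)) S ->
  exists B, base M B /\ maxin M Z (setI B Z) /\
    (forall x, S x <-> (ground M x /\ ~ Z x /\ ~ B x)).
Proof.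
  intros [hS hm]. simpl in hS, hm. destruct hS as ((hSG&B&hB&hd)&hSZ).
  assert (hiff : forall x, S x <-> (ground M x /\ ~ Z x /\ ~ B x)).
  { intro x; split.
    - intro hx. split; auto. split; [apply hSZ; auto|apply hd; auto].
    - intro hx. refine (hm (fun x => ground M x /\ ~ Z x /\ ~ B x) _ _ x hx).
      + split; [split|].
        * intros y (h&_); auto.
        * exists B; split; auto. intros y (_&_&h); auto.
        * intros y (_&h&_); auto.
      + intros y hy. split; auto. split; [apply hSZ; auto|apply hd; auto]. }
  exists B. split; auto. split; auto.
  split; [apply (indep_sub hM B); [apply base_indep; auto|sunf; tauto]|].
  split; [sunf; tauto|].
  intros K hK hBK hKZ y hy. split; [|apply hKZ; auto].
  apply NNPP; intro hBy.
  assert (hI0 : indep M (setU (setI B Z) (set1 y))).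
  { apply (indep_sub hM K); auto. sunf. intros z [hz|hz]; subst; auto. }
  destruct (ext_maxin hM _ (setU B (set1 y)) hI0) as (J'&hJ'&hs).
  { sunf. intros z [[h1 _]|h1]; auto. }
  assert (hbJ : base M J').
  { apply (base_of_maxin_sup hM (setU B (set1 y)) J' B); auto. sunf; auto. }
  assert (hnot : ~ subset B J').
  { intro hBJ. apply hBy. destruct hB as [_ hmB].
    apply (hmB (setU B (set1 y))).
    - apply (indep_sub hM J'); [apply base_indep; auto|]. sunf. intros z [h|h]; subst; auto.
      all: try (apply hs; right; auto).
    - sunf; auto.
    - sunf; auto. }
  apply not_all_ex_not in hnot. destruct hnot as (x&hx).
  apply imply_to_and in hx. destruct hx as (hBx&hJx).
  assert (hZx : ~ Z x). { intro hZ. apply hJx. apply hs. left. split; auto. }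
  assert (hSx : S x).
  { refine (hm (setU S (set1 x)) _ _ x _).
    - split; [split|].
      + sunf. intros z [h|h]; subst; auto; apply (indep_ground hM B); auto; apply base_indep; auto.
      + exists J'. split; auto. sunf. intros z [h|h] hz; subst; auto.
        destruct hJ' as (_&hJX&_). destruct (hJX z hz) as [h'|h'].
        * apply (hd z); auto.
        * subst. apply hSZ in h. apply h. apply hKZ. auto.
      + sunf. intros z [h|h]; subst; auto; apply hSZ; auto.
    - sunf; auto.
    - sunf; auto. }
  apply (hd x); auto.
Qed.

Lemma P3 {E} {M : matroid E} (hM : is_matroid M) B1 Z J2 :
  base M B1 -> maxin M Z (setI B1 Z) -> maxin M Z J2 ->
  base M (fun x => J2 x \/ (B1 x /\ ~ Z x)).
Proof.
  intros hB1 hB1Z hJ2.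
  set (X := fun x => J2 x \/ (B1 x /\ ~ Z x)).
  destruct (ext_maxin hM J2 X) as (J'&hJ'&hs).
  { destruct hJ2 as (h&_); auto. }
  { unfold X; sunf; auto. }
  pose proof hM as (_&_&_&hI3&_).
  assert (hbJ : base M J').
  { apply NNPP; intro hb. destruct hJ' as (hJ'i&hJ'X&hJ'm).
    destruct (hI3 J' B1 hJ'i hb hB1) as (z&hz&hnz&hi).
    destruct (classic (Z z)) as [hZ|hZ].
    - apply hnz. apply hs. destruct hJ2 as (_&hJ2Z&hm).
      apply (hm (setU J2 (set1 z))); sunf; auto.
      + apply (indep_sub hM _ _ hi). sunf. intros w [h|h]; subst; auto.
      + intros w [h|h]; subst; auto.
    - apply hnz. apply (hJ'm _ hi); sunf; auto. intros w [h|h]; subst; auto.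
      unfold X; auto. }
  assert (hJZ : maxin M Z (setI J' Z)).
  { split; [apply (indep_sub hM J'); [apply base_indep; auto|sunf; tauto]|].
    split; [sunf; tauto|].
    intros K hK hs' hKZ x hx. pose proof hJ2 as (_&hJ2Z&hm).
    assert (hJ2K : subset J2 K). { intros y hy. apply hs'. split; auto. }
    assert (h := hm K hK hJ2K hKZ x hx). split; auto. }
  pose proof (P1 hM _ _ hbJ hJZ) as hS'.
  pose proof (P1 hM _ _ hB1 hB1Z) as hS1.
  assert (hsub : subset X J').
  { intros x hx. destruct hx as [hx|(hx&hZx)]; [apply hs; auto|].
    apply NNPP; intro hJx.
    destruct hS1 as [_ hm1].
    assert (h : (fun x => ground M x /\ ~ Z x /\ ~ J' x) x).
    { split; [apply (indep_ground hM B1); [apply base_indep; auto|auto]|auto]. }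
    refine (proj2 (proj2 (hm1 _ (proj1 hS') _ x h)) hx).
    intros y (hy1&hy2&hy3). split; auto. split; auto. intro hJy.
    destruct hJ' as (_&hJX&_). destruct (hJX y hJy) as [h'|h']; [|tauto].
    destruct hJ2 as (_&h''&_). auto. }
  apply (base_ext hM J'); auto. destruct hJ' as (_&h&_); auto.
Qed.

Lemma contr_indep_all {E} {M : matroid E} (hM : is_matroid M) Z J JZ :
  indep (contr M Z) J -> maxin M Z JZ -> indep M (setU J JZ).
Proof.
  intros hJ hJZ. simpl in hJ. destruct hJ as (hJs&S&hS&hd).
  destruct (P2 hM S Z hS) as (B&hB&hBZ&hiff).
  pose proof (P3 hM B Z JZ hB hBZ hJZ) as hb.
  apply (indep_sub hM _ _ (base_indep hb)). intros x [hx|hx]; auto.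
  right. destruct (hJs x hx) as (hG&hZ). split; auto.
  apply NNPP; intro hBx. apply (hd x hx). apply hiff. auto.
Qed.

Lemma contr_indep_intro {E} {M : matroid E} (hM : is_matroid M) Z J JZ :
  subset J (fun x => ground M x /\ ~ Z x) -> maxin M Z JZ -> indep M (setU J JZ) ->
  indep (contr M Z) J.
Proof.
  intros hJs hJZ hi.
  destruct (ext_maxin hM _ (ground M) hi) as (B&hB&hs).
  { apply (indep_ground hM); auto. }
  apply maxin_base in hB; auto.
  assert (hBZ : maxin M Z (setI B Z)).
  { split; [apply (indep_sub hM B); [apply base_indep; auto|sunf; tauto]|].
    split; [sunf; tauto|].
    intros K hK hs' hKZ x hx. destruct hJZ as (hJ&hJZs&hm).
    assert (hJK : subset JZ K). { intros y hy. apply hs'. split; [apply hs; right; auto|auto]. }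
    split; [apply hs; right; apply (hm K hK hJK hKZ); auto|auto]. }
  pose proof (P1 hM _ _ hB hBZ) as hS.
  simpl. split.
  - intros x hx. destruct (hJs x hx); split; auto.
  - eexists. split; [exact hS|]. intros x hx (_&_&h). apply h. apply hs. left; auto.
Qed.

Lemma contr_mono {E} {M : matroid E} (hM : is_matroid M) Z Z' J :
  subset Z' Z -> indep (contr M Z) J -> indep (contr M Z') J.
Proof.
  intros hZ hJ.
  destruct (exists_maxin hM Z') as (JZ'&hJZ').
  destruct (ext_maxin hM JZ' Z) as (JZ&hJZ&hs).
  { destruct hJZ' as (h&_); auto. }
  { destruct hJZ' as (_&h&_); intros x hx; auto. }
  pose proof (contr_indep_all hM Z J JZ hJ hJZ) as hi.
  apply (contr_indep_intro hM Z' J JZ'); auto.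
  - simpl in hJ. destruct hJ as (hJs&_). intros x hx. destruct (hJs x hx) as (h1&h2).
    split; auto.
  - apply (indep_sub hM _ _ hi). sunf. intros x [h|h]; auto.
Qed.

Lemma maxin_self {E} {M : matroid E} (hM : is_matroid M) Z :
  indep M Z -> maxin M Z Z.
Proof. intros h. split; auto. split; [sunf; auto|]. intros J' _ _ h'; auto. Qed.

Lemma contr_ind_iff {E} {M : matroid E} (hM : is_matroid M) Z J :
  indep M Z -> (indep (contr M Z) J <-> (disj J Z /\ indep M (setU J Z))).
Proof.
  intros hZ. split.
  - intros hJ. split.
    + simpl in hJ. destruct hJ as (hJs&_). intros x hx. apply (hJs x hx).
    + apply (contr_indep_all hM Z J Z hJ (maxin_self hM Z hZ)).
  - intros (hd&hi). apply (contr_indep_intro hM Z J Z); auto.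
    + intros x hx. split; [apply (indep_ground hM _ hi); left; auto|apply hd; auto].
    + apply maxin_self; auto.
Qed.

Lemma contr_base_iff {E} {M : matroid E} (hM : is_matroid M) Z B' :
  indep M Z -> (base (contr M Z) B' <-> (disj B' Z /\ base M (setU B' Z))).
Proof.
  intros hZ. split.
  - intros [hi hm]. apply (contr_ind_iff hM Z B' hZ) in hi. destruct hi as (hd&hi).
    split; auto. apply (base_of_noext hM); auto.
    intros z hz. destruct (classic (Z z)) as [h|h]; [right; auto|left].
    apply (hm (setU B' (set1 z))); sunf; auto.
    apply (contr_ind_iff hM Z _ hZ). split.
    + sunf. intros x [hx|hx]; subst; auto.
    + apply (indep_sub hM _ _ hz). sunf. intros x [[hx|hx]|hx]; subst; auto.
  - intros (hd&hb). split.
    + apply (contr_ind_iff hM Z B' hZ). split; auto. apply base_indep; auto.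
    + intros J hJ hs x hx. apply (contr_ind_iff hM Z J hZ) in hJ. destruct hJ as (hdJ&hJ).
      destruct hb as [_ hm].
      assert (h : subset (setU B' Z) (setU J Z)). { sunf. intros y [hy|hy]; auto. }
      destruct (hm _ hJ h x (or_introl hx)) as [h'|h']; auto. exfalso; apply (hdJ x); auto.
Qed.

Lemma contr_matroid {E} {M : matroid E} (hM : is_matroid M) Z :
  indep M Z -> is_matroid (contr M Z).
Proof.
  intros hZ. split; [|split; [|split; [|split]]].
  - intros J hJ. simpl in hJ. destruct hJ as (h&_). simpl. auto.
  - apply (contr_ind_iff hM Z _ hZ). split; [sunf; auto|]. apply (indep_sub hM _ _ hZ). sunf.
    intros x [[]|h]; auto.
  - intros I0 J hI hs. apply (contr_ind_iff hM Z _ hZ) in hI. destruct hI as (hd&hi).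
    apply (contr_ind_iff hM Z _ hZ). split; [sunf; auto|].
    apply (indep_sub hM _ _ hi). sunf. intros x [h|h]; auto.
  - intros I0 B0 hI hnb hB. 
    apply (contr_base_iff hM Z _ hZ) in hB. destruct hB as (hdB&hB).
    pose proof (proj1 (contr_ind_iff hM Z _ hZ) hI) as (hd&hi).
    assert (hnb' : ~ base M (setU I0 Z)).
    { intro hb. apply hnb. apply (contr_base_iff hM Z _ hZ). auto. }
    pose proof hM as (_&_&_&hI3&_).
    destruct (hI3 _ _ hi hnb' hB) as (x&hx&hnx&hix).
    assert (hZx : ~ Z x). { intro; apply hnx; right; auto. }
    exists x. split; [destruct hx; auto; tauto|]. split; [intro; apply hnx; left; auto|].
    apply (contr_ind_iff hM Z _ hZ). split.
    + sunf. intros y [hy|hy]; subst; auto.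
    + apply (indep_sub hM _ _ hix). sunf. intros y [[hy|hy]|hy]; subst; auto.
  - intros I0 X hI hIX hX. simpl in hX.
    pose proof (proj1 (contr_ind_iff hM Z _ hZ) hI) as (hd&hi).
    destruct (ext_maxin hM _ (setU X Z) hi) as (K&hK&hs).
    { sunf. intros x [h|h]; auto. }
    exists (fun x => K x /\ ~ Z x). destruct hK as (hKi&hKX&hKm).
    assert (hKZ : subset Z K). { intros x hx; apply hs; right; auto. }
    split; [|split; [|split]].
    + apply (contr_ind_iff hM Z _ hZ). split; [sunf; tauto|].
      apply (indep_sub hM _ _ hKi). sunf. intros x [[h _]|h]; auto.
    + intros x hx. split; [apply hs; left; auto|apply hd; auto].
    + intros x (h1&h2). destruct (hKX x h1); auto. tauto.
    + intros J' hJ' hs' hJX x hx.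
      pose proof (proj1 (contr_ind_iff hM Z _ hZ) hJ') as (hd'&hi').
      split; [|apply hd'; auto].
      apply (hKm _ hi'); [|sunf; intros y [h|h]; auto|left; auto].
      sunf. intros y hy. destruct (classic (Z y)); auto; left; apply hs'; split; auto.
Qed.

Lemma extend_to_base {E} {M : matroid E} (hM : is_matroid M) Z J :
  maxin M Z J -> exists B1, base M B1 /\ subset J B1 /\ (forall x, B1 x -> Z x -> J x).
Proof.
  intros hJ. pose proof hJ as (hJi&hJZ&hJm).
  destruct (ext_maxin hM J (fun z => J z \/ ~ Z z) hJi) as (J'&hJ'&hs).
  { sunf; auto. }
  pose proof hJ' as (hJ'i&hJ'X&hJ'm).
  assert (hb : base M J').
  { apply NNPP; intro hb. pose proof hM as (_&_&_&hI3&_).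
    destruct (base_exists hM) as (B0&hB0).
    destruct (hI3 J' B0 hJ'i hb hB0) as (z&hz&hnz&hi).
    apply hnz. destruct (classic (Z z)) as [hZ|hZ].
    - apply hs. apply (hJm (setU J (set1 z))); sunf; auto.
      + apply (indep_sub hM _ _ hi). sunf. intros w [h|h]; subst; auto.
      + intros w [h|h]; subst; auto.
    - apply (hJ'm _ hi); sunf; auto. intros w [h|h]; subst; auto. }
  exists J'. split; auto. split; auto. intros x hx hZ. destruct (hJ'X x hx); tauto.
Qed.

Lemma maxin_ext {E} {M : matroid E} (hM : is_matroid M) Z J J' :
  maxin M Z J -> subset J J' -> subset J' J -> maxin M Z J'.
Proof.
  intros (h1&h2&h3) s1 s2. split; [apply (indep_sub hM _ _ h1 s2)|]. split.
  - intros x hx; auto.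
  - intros K hK hs hKZ x hx. apply s1. apply (h3 K hK); auto. intros y hy; auto.
Qed.

Lemma circuit_exists {E} {M : matroid E} (hM : is_matroid M) (hG : forall x, ground M x) J y :
  indep M J -> ~ indep M (setU J (set1 y)) ->
  exists C, circuit M C /\ C y /\ forall z, C z -> z <> y -> J z.
Proof.
  intros hJ hdep.
  set (C := fun z => z = y \/ (J z /\ indep M (setU (remx J z) (set1 y)))).
  exists C. split; [split; [|split]|].
  - intros x _; auto.
  - intro hC. set (Z0 := setU J (set1 y)).
    destruct (ext_maxin hM C Z0 hC) as (K&hK&hCK).
    { unfold C, Z0; sunf. intros z [h|(h&_)]; auto. }
    destruct (extend_to_base hM Z0 K hK) as (B1&hB1&hKB&hBK).
    assert (hB1Z : maxin M Z0 (setI B1 Z0)).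
    { apply (maxin_ext hM Z0 K); auto. intros x hx. split; auto. destruct hK as (_&h&_); auto.
      intros x (h1&h2); auto. }
    assert (hJZ : maxin M Z0 J).
    { split; auto. split; [unfold Z0; sunf; auto|].
      intros J' hJ' hs hs' x hx. destruct (hs' x hx) as [h|h]; auto. subst.
      exfalso; apply hdep. apply (indep_sub hM _ _ hJ'). sunf. intros z [h0|h0]; subst; auto. }
    pose proof (P3 hM B1 Z0 J hB1 hB1Z hJZ) as hB2.
    assert (hnot : ~ subset J K).
    { intro hs. apply hdep. destruct hK as (hKi&_). apply (indep_sub hM _ _ hKi).
      sunf. intros z [h|h]; subst; auto. apply hCK. left; auto. }
    apply not_all_ex_not in hnot. destruct hnot as (d&hd).
    apply imply_to_and in hd. destruct hd as (hJd&hKd).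
    set (Ind := fun z => remx J d z \/ (B1 z /\ ~ Z0 z)).
    assert (hInd : indep M Ind).
    { apply (indep_sub hM _ _ (base_indep hB2)). unfold Ind; sunf. intros z [(h&_)|h]; auto. }
    assert (hnb : ~ base M Ind).
    { intros [_ hm]. assert (h := hm _ (base_indep hB2)).
      assert (hs : subset Ind (fun x => J x \/ (B1 x /\ ~ Z0 x))).
      { unfold Ind; sunf. intros z [(h1&_)|h1]; auto. }
      destruct (h hs d (or_introl hJd)) as [(_&h2)|(_&h2)]; auto.
      apply h2. left; auto. }
    pose proof hM as (_&_&_&hI3&_).
    destruct (hI3 _ _ hInd hnb hB1) as (x&hx&hnx&hix).
    assert (hZx : Z0 x). { apply NNPP; intro h. apply hnx. right; auto. }
    assert (hKx : K x) by auto.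
    assert (hxy : x = y).
    { destruct hZx as [h|h]; auto. exfalso. apply hnx. left. split; auto. intro; subst; auto. }
    subst x. apply hKd. apply hCK. right. split; auto.
    apply (indep_sub hM _ _ hix). unfold Ind; sunf. intros z [h|h]; auto.
  - intros D hD hnD. apply not_all_ex_not in hnD. destruct hnD as (c&hc).
    apply imply_to_and in hc. destruct hc as (hCc&hDc).
    destruct hCc as [hc|(hJc&hic)].
    + subst. apply (indep_sub hM _ _ hJ). intros z hz. destruct (hD z hz) as [h|(h&_)]; auto.
      subst; tauto.
    + apply (indep_sub hM _ _ hic). intros z hz. destruct (hD z hz) as [h|(h&_)].
      * right; auto.
      * left. split; auto. intro; subst; tauto.
  - split; [left; auto|]. intros z [h|(h&_)] hzy; auto. tauto.
Qed.

Definition Qb {E} (N : matroid E) (X : E -> Prop) (x : E) :=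
  exists B1, base N B1 /\ B1 x /\
    forall z, ~ B1 z -> indep N (setU (remx B1 x) (set1 z)) -> X z.
Definition CL {E} (N : matroid E) (X : E -> Prop) (x : E) :=
  indep (contr N (fun z => ~ X z /\ z <> x)) (set1 x).

Lemma remx_not_base {E} {N : matroid E} B1 x : base N B1 -> B1 x -> ~ base N (remx B1 x).
Proof.
  intros hB hx [_ hm]. assert (h := hm B1 (base_indep hB)).
  assert (hs : subset (remx B1 x) B1) by (sunf; tauto).
  destruct (h hs x hx) as [_ h']; auto.
Qed.

Lemma Q2span {E} {N : matroid E} (hN : is_matroid N) (hG : forall x, ground N x) X x :
  Qb N X x -> span (dual N) X x.
Proof.
  intros (B1&hB1&hx&hQ). split; [apply hG|]. right.
  set (C := fun z => z = x \/ (~ B1 z /\ indep N (setU (remx B1 x) (set1 z)))).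
  exists C. split; [split; [|split]|split].
  - intros y _; apply hG.
  - intros (_&B'&hB'&hd). pose proof hN as (_&_&_&hI3&_).
    assert (hi : indep N (remx B1 x)).
    { apply (indep_sub hN _ _ (base_indep hB1)). sunf; tauto. }
    destruct (hI3 _ _ hi (remx_not_base B1 x hB1 hx) hB') as (z&hz&hnz&hiz).
    assert (hzx : z <> x). { intro; subst. apply (hd x); [left; auto|auto]. }
    assert (hBz : ~ B1 z). { intro h. apply hnz. split; auto. }
    apply (hd z); auto. right; auto.
  - intros D hD hnD. apply not_all_ex_not in hnD. destruct hnD as (c&hc).
    apply imply_to_and in hc. destruct hc as (hCc&hDc).
    split; [intros y _; apply hG|].
    destruct hCc as [hc|(hBc&hic)].
    + subst c. exists B1. split; auto. intros y hy. destruct (hD y hy) as [h|(h&_)]; auto.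
      subst; tauto.
    + exists (setU (remx B1 x) (set1 c)). split; [apply (exch_base hN); auto|].
      intros y hy hB'. destruct (hD y hy) as [h|(h&_)].
      * subst y. destruct hB' as [(_&h')|h']; auto. unfold set1 in h'. subst. tauto.
      * destruct hB' as [(h'&_)|h']; auto. unfold set1 in h'. subst; tauto.
  - left; auto.
  - intros y [h|(h1&h2)] hyx; [tauto|]. apply hQ; auto.
Qed.

Lemma span2Q {E} {N : matroid E} (hN : is_matroid N) (hG : forall x, ground N x) X x :
  span (dual N) X x -> ~ X x -> Qb N X x.
Proof.
  intros (_&[hX|(C&hC&hCx&hCX)]) hnX; [tauto|].
  destruct hC as (hCs&hCdep&hCmin).
  assert (hi : indep (dual N) (remx C x)).
  { apply hCmin; [sunf; tauto|]. intro h. destruct (h x hCx); auto. }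
  destruct hi as (_&B1&hB1&hd).
  assert (hB1x : B1 x).
  { apply NNPP; intro h. apply hCdep. split; auto. exists B1. split; auto.
    intros y hy. destruct (classic (y = x)); [subst; auto|apply hd; split; auto]. }
  exists B1. split; auto. split; auto.
  intros z hz hiz.
  assert (hzx : z <> x) by (intro; subst; auto).
  pose proof (exch_base hN B1 x z hB1 hB1x hz hiz) as hB'.
  apply NNPP; intro hXz. apply hCdep. split; auto. eexists; split; [exact hB'|].
  intros y hy [(h1&h2)|h1].
  - apply (hd y); auto. split; auto.
  - unfold set1 in h1. subst y. apply hXz. apply hCX; auto.
Qed.

Lemma Q2CL {E} {N : matroid E} (hN : is_matroid N) (hG : forall x, ground N x) X x :
  ~ X x -> Qb N X x -> CL N X x.
Proof.
  intros hnX (B1&hB1&hx&hQ).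
  set (T' := fun z => (~ X z /\ z <> x) \/ (B1 z /\ z <> x)).
  assert (hm : maxin N T' (remx B1 x)).
  { split; [apply (indep_sub hN _ _ (base_indep hB1)); sunf; tauto|].
    split; [unfold T'; sunf; tauto|].
    intros J' hJ' hs hs' w hw. destruct (hs' w hw) as [(h1&h2)|h]; auto.
    destruct (classic (B1 w)) as [hb|hb]; [split; auto|].
    exfalso. apply h1. apply hQ; auto. apply (indep_sub hN _ _ hJ').
    sunf. intros y [h|h]; subst; auto. }
  unfold CL. apply (contr_mono hN T').
  - unfold T'; sunf; auto.
  - assert (hsub : subset (set1 x) (fun y => ground N y /\ ~ T' y)).
    { intros y h. unfold set1 in h. subst. split; [apply hG|]. intros [(_&h)|(_&h)]; auto. }
    apply (contr_indep_intro hN T' _ _ hsub hm).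
    apply (indep_sub hN _ _ (base_indep hB1)). sunf. intros y [h|(h&_)]; subst; auto.
Qed.

Lemma CL2Q {E} {N : matroid E} (hN : is_matroid N) (hG : forall x, ground N x) X x :
  CL N X x -> Qb N X x.
Proof.
  intros hCL. set (T := fun z => ~ X z /\ z <> x).
  destruct (exists_maxin hN T) as (J&hJ).
  pose proof (contr_indep_all hN T _ J hCL hJ) as hi.
  pose proof hJ as (hJi&hJT&hJm).
  destruct (ext_maxin hN _ (fun z => J z \/ z = x \/ X z) hi) as (K&hK&hs).
  { sunf. intros y [h|h]; auto. }
  pose proof hK as (hKi&hKX&hKm).
  assert (hJK : subset J K) by (intros y hy; apply hs; right; auto).
  assert (hKx : K x) by (apply hs; left; reflexivity).
  assert (hb : base N K).
  { apply (base_of_noext hN); auto. intros w hw.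
    destruct (classic (J w \/ w = x \/ X w)) as [h|h].
    - apply (hKm _ hw); sunf; auto. intros y [h'|h']; subst; auto.
    - exfalso. apply h. left. apply (hJm (setU J (set1 w))); sunf; auto.
      + apply (indep_sub hN _ _ hw). sunf. intros y [h'|h']; subst; auto.
      + intros y [h'|h']; [auto|]. subst. split; intro; apply h; auto. }
  exists K. split; auto. split; auto.
  intros z hz hiz. apply NNPP; intro hXz.
  assert (hzx : z <> x) by (intro; subst; auto).
  apply hz. apply hJK. apply (hJm (setU J (set1 z))); sunf; auto.
  - apply (indep_sub hN _ _ hiz). sunf. intros y [h|h]; subst; auto.
    left. split; auto. apply hJT in h. destruct h; auto.
  - intros y [h|h]; subst; auto. unfold T; auto.
Qed.

Lemma CL_mono {E} {N : matroid E} (hN : is_matroid N) X X' x :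
  subset X X' -> CL N X x -> CL N X' x.
Proof.
  intros hs h. apply (contr_mono hN (fun z => ~ X z /\ z <> x)); [|exact h].
  intros z (h1&h2). split; auto.
Qed.

Lemma CL_trans {E} {N : matroid E} (hN : is_matroid N) (hG : forall x, ground N x) X Y x :
  ~ X x -> ~ Y x -> CL N Y x -> (forall y, Y y -> ~ X y -> CL N X y) -> CL N X x.
Proof.
  intros hXx hYx hCY hCX.
  set (P := fun z => ~ X z /\ z <> x /\ ~ Y z).
  set (Qs := fun z => Y z /\ ~ X z).
  set (L := fun z => P z \/ Qs z \/ z = x).
  assert (hxP : indep (contr N P) (set1 x)).
  { apply (contr_mono hN (fun z => ~ Y z /\ z <> x)); [|exact hCY].
    intros z (h1&h2&h3). split; auto. }
  destruct (exists_maxin hN P) as (JP&hJP).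
  pose proof (contr_indep_all hN P _ JP hxP hJP) as hi.
  pose proof hJP as (hJPi&hJPs&hJPm).
  destruct (ext_maxin hN _ L hi) as (K&hK&hs).
  { unfold L; sunf. intros y [h|h]; auto. }
  pose proof hK as (hKi&hKL&hKm).
  assert (hQ : forall q, Qs q -> K q).
  { intros q hq. apply NNPP; intro hKq. destruct hq as (hYq&hXq).
    pose proof (CL_mono hN X X q (fun _ h => h) (hCX q hYq hXq)) as hc.
    assert (hc' : indep (contr N (remx L q)) (set1 q)).
    { apply (contr_mono hN (fun z => ~ X z /\ z <> q)); [|exact hc].
      intros z ([h|[h|h]]&hzq).
      - destruct h as (h1&h2&h3). split; auto.
      - destruct h as (h1&h2). split; auto.
      - subst. split; auto. }
    assert (hm : maxin N (remx L q) K).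
    { split; auto. split.
      - intros y hy. split; auto. intro; subst; auto.
      - intros J' hJ' h1 h2. apply hKm; auto. intros y hy. apply h2; auto. }
    pose proof (contr_indep_all hN _ _ K hc' hm) as hiq.
    apply hKq. apply (hKm _ hiq); sunf; auto.
    intros y [h|h]; subst; auto. right; left; split; auto. }
  set (JQ := fun z => JP z \/ Qs z).
  assert (hmQ : maxin N (fun z => ~ X z /\ z <> x) JQ).
  { split; [apply (indep_sub hN _ _ hKi); unfold JQ; sunf; intros y [h|h]; auto|].
    split.
    - unfold JQ. intros y [h|h].
      + destruct (hJPs y h) as (h1&h2&h3). split; auto.
      + destruct h as (h1&h2). split; auto. intro; subst; auto.
    - intros J'' hJ'' h1 h2 w hw. destruct (classic (Qs w)) as [hq|hq]; [right; auto|left].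
      destruct (h2 w hw) as (hw1&hw2).
      assert (hPw : P w). { split; auto. split; auto. intro hYw. apply hq. split; auto. }
      apply (hJPm (fun z => J'' z /\ P z)); auto.
      + apply (indep_sub hN _ _ hJ''). sunf; tauto.
      + intros y hy. split; auto. apply h1. left; auto.
      + intros y (_&h); auto.
      }
  assert (hsub : subset (set1 x) (fun y => ground N y /\ ~ (~ X y /\ y <> x))).
  { intros y h. unfold set1 in h. subst. split; [apply hG|]. intros (_&h); auto. }
  unfold CL. apply (contr_indep_intro hN _ _ JQ hsub hmQ).
  apply (indep_sub hN _ _ hKi). unfold JQ; sunf. intros y [h|[h|h]]; subst; auto.
Qed.

Theorem mainTheorem12 (E : Type) (M N : matroid E) (I B : E -> Prop) :
  countable_type E ->
  is_matroid M -> is_matroid N ->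
  (forall x, ground M x) -> (forall x, ground N x) ->
  finitary M -> fin_cofin_sum N ->
  indep M I -> indep N I -> dually_safe M N I ->
  Bset (contr M I) (contr N I) (Wmax (contr M I) (contr N I)) B ->
  nice_feasible M N (setU I B) /\ dually_safe M N (setU I B).
Proof.
  intros _ hM hN gM gN _ _ hIM hIN hDS hB.
  pose proof (contr_matroid hM I hIM) as hM'.
  pose proof (contr_matroid hN I hIN) as hN'.
  pose proof (fun J => contr_ind_iff hM I J hIM) as FM'.
  pose proof (fun J => contr_ind_iff hN I J hIN) as FN'.
  destruct hB as (hBr&hBc).
  destruct hBr as ((hBi&hBW)&hBmax).
  assert (hW_I : forall x, Wmax (contr M I) (contr N I) x -> ~ I x).
  { intros x (Y&(hYg&_)&hYx). apply hYg in hYx. destruct hYx; auto. }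
  apply FM' in hBi as hBi'. destruct hBi' as (hBI&hBIM).
  assert (hc : forall y, Wmax (contr M I) (contr N I) y -> ~ B y ->
            ~ indep M (setU (setU B I) (set1 y))).
  { intros y hy hBy hi. apply hBy.
    apply (hBmax (setU B (set1 y))); [|sunf; auto|sunf; auto].
    split; [|intros z [h|h]; [auto|unfold set1 in h; subst; auto]].
    apply FM'. split.
    - intros z [h|h]; [apply hBI; auto|unfold set1 in h; subst; apply hW_I; auto].
    - apply (indep_sub hM _ _ hi). sunf. intros z [[h|h]|h]; auto. }
  set (W := Wmax (contr M I) (contr N I)) in *.
  pose proof (base_indep hBc) as hBN.
  destruct (exists_maxin hN' (setC W)) as (J1&hJ1).
  pose proof (contr_indep_all hN' _ B J1 hBN hJ1) as hBJ1.
  assert (hd : forall y J, W y -> ~ B y -> maxin (contr N I) (setC W) J ->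
            ~ indep (contr N I) (setU (setU B (set1 y)) J)).
  { intros y J hy hBy hJ hi. apply hBy.
    assert (hi2 : indep (contr (contr N I) (setC W)) (setU B (set1 y))).
    { apply (contr_indep_intro hN' _ _ J); auto.
      intros z [h|h]; [|unfold set1 in h; subst].
      - split; [split; [apply gN|apply hBI; auto]|]. intro h'; apply h'; auto.
      - split; [split; [apply gN|apply hW_I; auto]|]. intro h'; apply h'; auto. }
    destruct hBc as [_ hm]. apply (hm _ hi2); sunf; auto. }
  apply FN' in hBJ1 as hBJ1'. destruct hBJ1' as (hBJ1I&hBJ1N).
  set (Z := setU I B).
  assert (hZM : indep M Z). { apply (indep_sub hM _ _ hBIM). unfold Z; sunf; tauto. }
  assert (hZN : indep N Z). { apply (indep_sub hN _ _ hBJ1N). unfold Z; sunf; tauto. }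
  pose proof (contr_matroid hM Z hZM) as hM''.
  pose proof (contr_matroid hN Z hZN) as hN''.
  pose proof (fun J => contr_ind_iff hM Z J hZM) as FM''.
  pose proof (fun J => contr_ind_iff hN Z J hZN) as FN''.
  assert (hYW : forall Y, wave (contr M Z) (contr N Z) Y -> forall y, Y y -> W y /\ ~ Z y).
  { intros Y (hYg&BY&hBYr&hBYc) y hy.
    assert (hYZ : forall z, Y z -> ~ Z z). { intros z hz. apply hYg in hz. destruct hz; auto. }
    split; [|auto].
    destruct hBYr as ((hBYi&hBYY)&hBYmax).
    apply FM'' in hBYi as hBYi'. destruct hBYi' as (hBYZ&hBYM).
    exists (fun z => W z \/ Y z). split; [|right; auto].
    split.
    - intros z [h|h]; split.
      + apply gM.
      + apply hW_I; auto.
      + apply gM.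
      + intro; apply (hYZ z h); left; auto.
    - exists (setU B BY). split.
      + split; [split|].
        * apply FM'. split.
          -- intros z [h|h]; [apply hBI; auto| intro; apply (hBYZ z h); left; auto].
          -- apply (indep_sub hM _ _ hBYM). unfold Z; sunf. intros z [[h|h]|h]; auto.
        * intros z [h|h]; [left; apply hBW; auto|right; apply hBYY; auto].
        * intros K (hKi&hKs) hs k hk. apply FM' in hKi. destruct hKi as (hKI&hKM).
          destruct (classic (B k)) as [h|hnB]; [left; auto|].
          destruct (classic (BY k)) as [h|hnBY]; [right; auto|].
          exfalso. destruct (hKs k hk) as [hWk|hYk].
          -- apply (hc k hWk hnB). apply (indep_sub hM _ _ hKM). sunf.
             intros z [[h|h]|h]; [left; apply hs; left; auto|right; auto|left; subst; auto].
          -- apply hnBY. apply (hBYmax (setU BY (set1 k))); [|sunf; auto|sunf; auto].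
             split; [|intros z [h|h]; [auto|unfold set1 in h; subst; auto]].
             apply FM''. split.
             ++ intros z [h|h]; [apply hBYZ; auto|].
                unfold set1 in h; subst; unfold Z; intros [h|h]; [apply (hKI _ hk h)|auto].
             ++ apply (indep_sub hM _ _ hKM). unfold Z; sunf.
                intros z [[h|h]|[h|h]]; [left; apply hs; right; auto|left; subst; auto|right; auto|left; apply hs; left; auto].
      + destruct (exists_maxin hN' (setC (fun z => W z \/ Y z))) as (J0&hJ0).
        pose proof hJ0 as (hJ0i&hJ0s&_).
        destruct (ext_maxin hN' J0 (setC W) hJ0i) as (J1'&hJ1'&hs01).
        { intros z hz h. apply (hJ0s z hz). left; auto. }
        pose proof (contr_indep_all hN' _ B J1' hBN hJ1') as hBJ1'.
        apply FN' in hBJ1'. destruct hBJ1' as (hdI&hiN).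
        apply FN' in hJ0i as hJ0i'. destruct hJ0i' as (hJ0I&_).
        assert (hJ0Z : indep (contr N Z) J0).
        { apply FN''. split.
          - intros z hz [h|h]; [apply (hJ0I z hz h)|]. apply (hJ0s z hz). left; apply hBW; auto.
          - apply (indep_sub hN _ _ hiN). unfold Z; sunf. intros z [h|[h|h]]; auto. }
        destruct (ext_maxin hN'' J0 (setC Y) hJ0Z) as (J2&hJ2&hs02).
        { intros z hz h. apply (hJ0s z hz). right; auto. }
        pose proof (contr_indep_all hN'' _ BY J2 hBYc hJ2) as hBYJ2.
        apply FN'' in hBYJ2. destruct hBYJ2 as (_&hiN2).
        apply (contr_indep_intro hN' _ _ J0); auto.
        * intros z hz. split.
          -- split; [apply gN|]. destruct hz as [h|h]; [apply hBI; auto|].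
             intro; apply (hBYZ z h); left; auto.
          -- intro h'. apply h'. destruct hz as [h|h]; [left; apply hBW; auto|right; apply hBYY; auto].
        * apply FN'. split.
          -- intros z [[h|h]|h]; [apply hBI; auto| |apply (hJ0I z h)].
             intro; apply (hBYZ z h); left; auto.
          -- apply (indep_sub hN _ _ hiN2). unfold Z; sunf.
             intros z [[[h|h]|h]|h]; [right; right; auto|left; left; auto|left; right; auto|right; left; auto]. }
  assert (hJ1I : disj J1 I).
  { pose proof hJ1 as (hJ1i&_). apply FN' in hJ1i. destruct hJ1i; auto. }
  assert (emp : forall Y, (forall y, Y y -> W y /\ ~ Z y) ->
            base (contr (contr N Z) (setC Y)) (@set0 E)).
  { intros Y hY.
    assert (hJ1Z : maxin (contr N Z) (setC W) J1).
    { pose proof hJ1 as (hJ1i&hJ1s&hJ1m).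
      split; [|split; [auto|]].
      - apply FN''. split.
        + intros z hz [h|h]; [apply (hJ1I z hz h)|apply (hJ1s z hz); apply hBW; auto].
        + apply (indep_sub hN _ _ hBJ1N). unfold Z; sunf. intros z [h|[h|h]]; auto.
      - intros J' hJ' hs hs'. apply hJ1m; auto. apply FN'' in hJ'. destruct hJ' as (hd'&hi').
        apply FN'. split.
        + intros z hz hI. apply (hd' z hz). left; auto.
        + apply (indep_sub hN _ _ hi'). unfold Z; sunf. intros z [h|h]; auto. }
    destruct (exists_maxin hN'' (setC Y)) as (JY&hJY).
    split.
    - apply (contr_indep_intro hN'' _ _ JY); auto.
      + intros z [].
      + apply (indep_sub hN'' _ _ (proj1 hJY)). sunf. intros z [[]|h]; auto.
    - intros K hK _ k hk. exfalso.
      pose proof (proj1 hK k hk) as hg. destruct hg as (_&hnn).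
      assert (hYk : Y k) by (apply NNPP; auto).
      destruct (hY k hYk) as (hWk&hZk).
      assert (hKW : indep (contr (contr N Z) (setC W)) K).
      { apply (contr_mono hN'' (setC Y)); auto. intros z hz h. apply hz. apply (hY z h). }
      pose proof (contr_indep_all hN'' _ K J1 hKW hJ1Z) as hi.
      apply FN'' in hi. destruct hi as (_&hiN).
      apply (hd k J1 hWk (fun h => hZk (or_intror h)) hJ1). apply FN'. split.
      + intros z [[h|h]|h]; [apply hBI; auto| |apply (hJ1I z h)].
        unfold set1 in h; subst; intro; apply hZk; left; auto.
      + apply (indep_sub hN _ _ hiN). unfold Z; sunf.
        intros z [[[h|h]|h]|h]; [right; right; auto| left; left; subst; auto | left; right; auto | right; left; auto]. }
  split.
  - split.
    + split; [auto|split; [auto|]].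
      intros Y hYw. exists (@set0 E). split.
      * apply emp. intros y hy. apply (hYW Y hYw y hy).
      * apply FM''. split; [intros z []|]. apply (indep_sub hM _ _ hZM). sunf; intros z [[]|h]; auto.
    + split.
      * intros x (Y&hYw&hYx). destruct (hYW Y hYw x hYx) as (hWx&hZx). split.
        -- split; [apply gM|auto].
        -- intro hi. apply FM'' in hi. destruct hi as (_&hi).
           apply (hc x hWx (fun h => hZx (or_intror h))). apply (indep_sub hM _ _ hi).
           unfold Z; sunf. intros z [[h|h]|h]; auto.
      * apply emp. intros y (Y&hYw&hYy). apply (hYW Y hYw y hYy).
  - assert (WBS : forall y, W y -> ~ B y -> spano M Z y).
    { intros y hy hnB. split.
      - assert (hnd : ~ indep M (setU Z (set1 y))).
        { intro h. apply (hc y hy hnB). apply (indep_sub hM _ _ h). unfold Z; sunf.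
          intros z [[h'|h']|h']; auto. }
        destruct (circuit_exists hM gM Z y hZM hnd) as (C&hC&hCy&hCZ).
        split; [apply gM|right; exists C; split; auto].
      - unfold Z; intros [h|h]; [apply (hW_I y hy h)|auto]. }
    assert (QB : forall b, B b -> Qb N (fun z => W z /\ ~ B z) b).
    { intros b hb. set (B0 := fun z => B z \/ I z \/ J1 z).
      pose proof hJ1 as (hJ1i&hJ1s&hJ1m).
      assert (hB0 : base N B0).
      { apply (base_of_noext hN).
        - apply (indep_sub hN _ _ hBJ1N). unfold B0; sunf. intros z [h|[h|h]]; auto.
        - intros w hw. apply NNPP; intro hnB0.
          destruct (classic (W w)) as [hW|hW].
          + apply (hd w J1 hW (fun h => hnB0 (or_introl h)) hJ1). apply FN'. split.
            * intros z [[h|h]|h]; [apply hBI; auto| |apply (hJ1I z h)].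
              unfold set1 in h; subst; intro; apply hnB0; right; left; auto.
            * apply (indep_sub hN _ _ hw). unfold B0; sunf.
              intros z [[[h|h]|h]|h]; [left; left; auto|right; subst; auto|left; right; right; auto|left; right; left; auto].
          + apply hnB0. right; right. apply (hJ1m (setU J1 (set1 w))); [|sunf; auto| |sunf; auto].
            * apply FN'. split.
              -- intros z [h|h]; [apply (hJ1I z h)|unfold set1 in h; subst; intro; apply hnB0; right; left; auto].
              -- apply (indep_sub hN _ _ hw). unfold B0; sunf.
                 intros z [[h|h]|h]; [left; right; right; auto|right; subst; auto|left; right; left; auto].
            * intros z [h|h]; [apply hJ1s; auto|unfold set1 in h; subst; auto]. }
      exists B0. split; [auto|split; [left; auto|]].
      intros z hz hiz. split; [|intro; apply hz; left; auto].
      apply NNPP; intro hWz. apply hz. right; right.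
      apply (hJ1m (setU J1 (set1 z))); [|sunf; auto| |sunf; auto].
      - apply FN'. split.
        + intros y [h|h]; [apply (hJ1I y h)|unfold set1 in h; subst; intro; apply hz; right; left; auto].
        + apply (indep_sub hN _ _ hiz). unfold B0, remx; sunf.
          intros y [[h|h]|h]; [left; split; [right; right; auto|]|right; auto|left; split; [right; left; auto|]].
          * intro; subst. apply (hJ1s b h). apply hBW; auto.
          * intro; subst. apply (hBI b hb h).
      - intros y [h|h]; [apply hJ1s; auto|unfold set1 in h; subst; auto]. }
    intros x hxZ hE1. destruct hxZ as [hxI|hxB].
    + pose proof (hDS x hxI hE1) as hsp.
      assert (hn0 : ~ spano M I x) by (intros (_&h); auto).
      assert (hnZ : ~ spano M Z x) by (intros (_&h); apply h; left; auto).
      pose proof (span2Q hN gN _ _ hsp hn0) as hQ0.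
      pose proof (Q2CL hN gN _ _ hn0 hQ0) as hCL0.
      assert (hCL : CL N (spano M Z) x).
      { apply (CL_trans hN gN (spano M Z) (spano M I) x hnZ hn0 hCL0).
        intros y hy hny.
        assert (hBy : B y).
        { apply NNPP; intro hnB. apply hny. destruct hy as ((hg&hsp')&hnI). split.
          - split; auto. destruct hsp' as [h|(C&hC&hCy&hCI)]; [left; left; auto|right].
            exists C. split; auto. split; auto. intros z hz hzy. left; auto.
          - unfold Z; intros [h|h]; auto. }
        assert (hnWB : ~ (W y /\ ~ B y)) by (intros (_&h); auto).
        apply (CL_mono hN (fun z => W z /\ ~ B z)).
        - intros z (h1&h2). apply WBS; auto.
        - apply (Q2CL hN gN _ _ hnWB (QB y hBy)). }
      apply (Q2span hN gN). apply (CL2Q hN gN _ _ hCL).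
    + apply (Q2span hN gN). destruct (QB x hxB) as (B1&h1&h2&h3).
      exists B1. split; auto. split; auto. intros z hz hiz. destruct (h3 z hz hiz). apply WBS; auto.
Qed.
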